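(* Let $k\ge 1$ and consider a graph stream in which, at each time step $s$, a single new vertex $v_s$ (together with its incident edges) is added, so that the vertex sets satisfy $\mathcal{V}_{s+1}=\mathcal{V}_s\cup\{v_s\}$. Suppose that at some time $t$ the embedding matrix $\mathbf{F}_t\in\mathbb{R}^{|\mathcal{V}_t|\times k}$ is feasible for the round-$t$ optimization problem, i.e. $\mathbf{F}_t^{\top}\mathbf{F}_t=\mathbf{I}_{k\times k}$. For each $T\in\{0,1,2,\dots\}$, let $\mathbf{F}_{t+T+1}$ be obtained from $\mathbf{F}_{t+T}$ by the update procedure described below, where $s=t+T$ and $\mathcal{I}_{s+1}(v_s)$ is the set of influenced vertices at that step. Then for every $t'>t$, the matrix $\mathbf{F}_{t'}$ is feasible for the round-$t'$ problem, i.e. $\mathbf{F}_{t'}^{\top}\mathbf{F}_{t'}=\mathbf{I}_{k\times k}$.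
   Context: Embeddings: at time $s$, $\mathbf{F}_s\in\mathbb{R}^{|\mathcal{V}_s|\times k}$ has one row $(\mathbf{f}^{(s)}_u)^{\top}$ for each vertex $u\in\mathcal{V}_s$. The round-$s$ optimization problem minimizes a loss over $\mathbf{F}_s$ subject to the orthogonality constraint $\mathbf{F}_s^{\top}\mathbf{F}_s=\mathbf{I}_{k\times k}$. A matrix is feasible for this problem exactly when it satisfies this constraint. Influenced set: at each step, when the new vertex $v_s$ arrives, a set $\mathcal{I}_{s+1}(v_s)$ of already-arrived vertices ''influenced'' by $v_s$ is selected. The selection may be random, for example by an independent-cascade process started at $v_s$, run to a depth $D$, in which a vertex $v$ influences a neighbor $u$ with probability $1/(\text{in-degree of } u)$. This set is a nonempty subset of $\mathcal{V}_s$. Update procedure (going from $\mathbf{F}_s$ to $\mathbf{F}_{s+1}$): write $\mathcal{I}=\mathcal{I}_{s+1}(v_s)$. - The new vertex gets the average of the influenced embeddings: $\mathbf{f}^{(s+1)}_{v_s}=\frac{1}{|\mathcal{I}|}\sum_{u\in\mathcal{I}}\mathbf{f}^{(s)}_u$. - Set $\alpha_{s+1}=1-\sqrt{1-\frac{1}{|\mathcal{I}|}}$. - For each $u\in\mathcal{V}_s$: if $u\in\mathcal{I}$, then $\mathbf{f}^{(s+1)}_u=\mathbf{f}^{(s)}_u-\alpha_{s+1}\mathbf{f}^{(s+1)}_{v_s}$; otherwise $\mathbf{f}^{(s+1)}_u=\mathbf{f}^{(s)}_u$. - $\mathbf{F}_{s+1}\in\mathbb{R}^{|\mathcal{V}_{s+1}|\times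 k}$ is the matrix whose rows are $\mathbf{f}^{(s+1)}_u$ for $u\in\mathcal{V}_{s+1}$. *)

(* Defs.v *)
From HB Require Import structures.
From mathcomp Require Import all_boot all_order all_algebra.
Set Implicit Arguments. Unset Strict Implicit. Unset Printing Implicit Defensive.
Import Order.TTheory GRing.Theory Num.Theory.
Local Open Scope ring_scope.

Definition emb_mx (R : ringType) (T : Type) (k : nat)
  (f : T -> 'rV[R]_k) (Vs : seq T) : 'M[R]_(size Vs, k) :=
  \matrix_(i < size Vs) f (tnth (in_tuple Vs) i).

Definition feasible (R : ringType) (T : Type) (k : nat)
  (f : T -> 'rV[R]_k) (Vs : seq T) : Prop :=
  (emb_mx f Vs)^T *m emb_mx f Vs = 1%:M.

Definition upd_alpha (R : rcfType) (n : nat) : R :=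
  1 - Num.sqrt (1 - (n%:R)^-1).

(* Main.v *)
Require Import Defs.
From HB Require Import structures.
From mathcomp Require Import all_boot all_order all_algebra.
From mathcomp Require Import ring lra.
Import Order.TTheory GRing.Theory Num.Theory.
Local Open Scope ring_scope.

Lemma gram_entry (R : ringType) (T : Type) (k : nat) (f : T -> 'rV[R]_k)
  (Vs : seq T) i j :
  ((emb_mx f Vs)^T *m emb_mx f Vs) i j = \sum_(u <- Vs) f u 0 i * f u 0 j.
Proof.
rewrite mxE (big_tuple _ _ (in_tuple Vs)) /=.
by apply: eq_bigr => l _; rewrite !mxE.
Qed.

Lemma sum_shift (R : comRingType) (T : Type) (s : seq T) (y z : T -> R) (p q a : R) :
  \sum_(u <- s) (y u - a * p) * (z u - a * q) =
  \sum_(u <- s) y u * z u - a * q * \sum_(u <- s) y u - a * p * \sum_(u <- s) z u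
  + (size s)%:R * (a * a) * p * q.
Proof.
elim: s => [|x s IH]; first by rewrite !big_nil /=; ring.
rewrite !big_cons IH /= -addn1 natrD; ring.
Qed.

Lemma sum_filter_sub (R : ringType) (T : eqType) (V I : seq T) (F : T -> R) :
  uniq V -> uniq I -> {subset I <= V} ->
  \sum_(u <- V | u \in I) F u = \sum_(u <- I) F u.
Proof.
move=> uV uI sIV; rewrite -big_filter; apply: perm_big.
apply: uniq_perm; first exact: filter_uniq.
  exact: uI.
move=> x; rewrite mem_filter; case xI: (x \in I) => //=; exact: sIV.
Qed.

Lemma alpha_key (R : rcfType) (n : nat) : (0 < n)%N ->
  n%:R * (upd_alpha R n * upd_alpha R n) - 2 * upd_alpha R n * n%:R + 1 = 0.
Proof.
move=> n0; rewrite /upd_alpha.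
have nz : (n%:R : R) != 0 by rewrite pnatr_eq0 -lt0n.
have h0 : 0 <= 1 - (n%:R : R)^-1.
  rewrite subr_ge0 invf_le1 ?ltr0n // ler1n //.
set r := Num.sqrt _.
have hr : r * r = 1 - (n%:R)^-1 by rewrite -expr2 sqr_sqrtr.
have -> : n%:R * ((1 - r) * (1 - r)) - 2 * (1 - r) * n%:R + 1 =
          n%:R * (r * r) - n%:R + 1 :> R by ring.
rewrite hr mulrBr mulfV //; ring.
Qed.

Theorem lemma1 (R : rcfType) (T : eqType) (k : nat) (hk : (0 < k)%N)
  (V : nat -> seq T) (v : nat -> T) (I : nat -> seq T)
  (f : nat -> T -> 'rV[R]_k) (t : nat)
  (* graph stream: one new vertex v_s is added at each step *)
  (hVuniq : forall s, uniq (V s))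
  (hvnew : forall s, v s \notin V s)
  (hVstep : forall s, V s.+1 = rcons (V s) (v s))
  (* influenced sets I_{s+1}(v_s): nonempty duplicate-free subsets of V_s *)
  (hIuniq : forall s, uniq (I s))
  (hIne : forall s, I s != [::])
  (hIsub : forall s, {subset I s <= V s})
  (* feasibility at time t *)
  (hfeas : feasible (f t) (V t))
  (* update procedure for every step s = t + T, T >= 0 *)
  (hnew : forall s, (t <= s)%N ->
     f s.+1 (v s) = (size (I s))%:R^-1 *: \sum_(u <- I s) f s u)
  (hold : forall s, (t <= s)%N -> forall u, u \in V s ->
     f s.+1 u = if u \in I s
                then f s u - upd_alpha R (size (I s)) *: f s.+1 (v s)
                else f s u) :
  forall t', (t < t')%N -> feasible (f t') (V t').
Proof.
have step : forall s, (t <= s)%N ->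
  (emb_mx (f s.+1) (V s.+1))^T *m emb_mx (f s.+1) (V s.+1) =
  (emb_mx (f s) (V s))^T *m emb_mx (f s) (V s).
  move=> s hs; apply/matrixP => i j; rewrite !gram_entry hVstep big_rcons /=.
  set n := size (I s); set a := upd_alpha R n.
  set mi := f s.+1 (v s) 0 i; set mj := f s.+1 (v s) 0 j.
  have n0 : (0 < n)%N by rewrite lt0n size_eq0 hIne.
  have nz : (n%:R : R) != 0 by rewrite pnatr_eq0 -lt0n.
  have hmi : \sum_(u <- I s) f s u 0 i = n%:R * mi.
    by rewrite /mi hnew // mxE summxE mulrA mulfV // mul1r.
  have hmj : \sum_(u <- I s) f s u 0 j = n%:R * mj.
    by rewrite /mj hnew // mxE summxE mulrA mulfV // mul1r.
  rewrite (bigID (fun u => u \in I s)) /= [RHS](bigID (fun u => u \in I s)) /=.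
  have H1 : \sum_(u <- V s | u \in I s) f s.+1 u 0 i * f s.+1 u 0 j =
     \sum_(u <- V s | u \in I s) (f s u 0 i - a * mi) * (f s u 0 j - a * mj).
    rewrite big_seq_cond [RHS]big_seq_cond; apply: eq_bigr => u /andP[uV uI].
    by rewrite hold // uI !mxE.
  have H2 : \sum_(u <- V s | u \notin I s) f s.+1 u 0 i * f s.+1 u 0 j =
     \sum_(u <- V s | u \notin I s) f s u 0 i * f s u 0 j.
    rewrite big_seq_cond [RHS]big_seq_cond; apply: eq_bigr => u /andP[uV uI].
    by rewrite hold // (negbTE uI).
  rewrite H1 H2.
  rewrite !sum_filter_sub // sum_shift hmi hmj.
  have := @alpha_key R n n0; rewrite -/n -/a => key.
  set A := \sum_(u <- I s) _.
  set B := \sum_(u <- V s | _) _.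
  have -> : A - a * mj * (n%:R * mi) - a * mi * (n%:R * mj) + n%:R * (a * a) * mi * mj + B + mi * mj
    = A + B + mi * mj * (n%:R * (a * a) - 2 * a * n%:R + 1) by ring.
  by rewrite key mulr0 addr0.
elim=> // t' IH; rewrite ltnS leq_eqVlt => /orP[/eqP <-|ht].
  by rewrite /feasible step.
by rewrite /feasible step ?IH // ltnW.
Qed.
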